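(* Let $a,b>0$ with $a\neq2b$, $\eta\in(0,1]$, $T>0$ and $0<\tau\le T$. Let $d_T(t)=\frac1T\Theta(t)\Theta(T-t)$ be the density of a dark count uniformly distributed in the detection time window $[0,T]$, and define the coincidence probability of a photon detection and a dark count $$p_{\mathrm{ph\text{-}dc}}(T,\tau)=\iint_{|t_1-t_2|\le\tau}p_T(t_1)\,d_T(t_2)\,dt_1\,dt_2 .$$ Then $$p_{\mathrm{ph\text{-}dc}}(T,\tau)\frac{p_{\mathrm{det}}(T)}{\eta}=\frac{a}{2b(a-2b)T}\Big[1+2b\tau-e^{-2b\tau}+e^{-2bT}\big(1-2b\tau-e^{2b\tau}\big)\Big]-\frac{2b}{a(a-2b)T}\Big[1+a\tau-e^{-a\tau}+e^{-aT}\big(1-a\tau-e^{a\tau}\big)\Big].$$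
   Context: $\Theta$ is the Heaviside step function. The double-exponential photon state $(a,b)$ is the mixture over emission times $t_0$ with density $p_{\mathrm{em}}(t_0)=ae^{-at_0}\Theta(t_0)$ of pure photons with temporal wave function $\psi_{t_0}(t)=\sqrt{2b}\,e^{-b(t-t_0)}\Theta(t-t_0)$. For a detector of efficiency $\eta$, the detection-time density is $p(t)=\eta\int_0^\infty p_{\mathrm{em}}(t_0)|\psi_{t_0}(t)|^2dt_0$, $p_{\mathrm{det}}(T)=\int_0^Tp(t)\,dt$, and $p_T(t)=\Theta(t)\Theta(T-t)p(t)/p_{\mathrm{det}}(T)$ is the detection-time density conditioned on detection within $[0,T]$. *)

(* Defs.v *)
From Stdlib Require Import Reals Lra.
From Coquelicot Require Import Coquelicot.
Open Scope R_scope.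

(* Heaviside step function (value at 0 irrelevant for the integrals). *)
Definition Theta (x : R) : R := if Rle_dec 0 x then 1 else 0.

Definition p_em (a t0 : R) : R := a * exp (- a * t0) * Theta t0.

Definition psi (b t0 t : R) : R := sqrt (2 * b) * exp (- b * (t - t0)) * Theta (t - t0).

Definition p_dens (a b eta t : R) : R :=
  eta * RInt_gen (fun t0 => p_em a t0 * (Rabs (psi b t0 t)) ^ 2)
          (at_point 0) (Rbar_locally p_infty).

Definition p_det (a b eta T : R) : R := RInt (p_dens a b eta) 0 T.

Definition p_T (a b eta T t : R) : R :=
  Theta t * Theta (T - t) * p_dens a b eta t / p_det a b eta T.

Definition d_T (T t : R) : R := / T * Theta t * Theta (T - t).

Definition ind_close (tau t1 t2 : R) : R := if Rle_dec (Rabs (t1 - t2)) tau then 1 else 0.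

(* p_{ph-dc}(T,tau) = double integral over R^2 (as iterated improper integrals)
   of 1_{|t1-t2|<=tau} p_T(t1) d_T(t2) *)
Definition p_phdc (a b eta T tau : R) : R :=
  RInt_gen (fun t1 =>
     RInt_gen (fun t2 => ind_close tau t1 t2 * p_T a b eta T t1 * d_T T t2)
       (Rbar_locally m_infty) (Rbar_locally p_infty))
   (Rbar_locally m_infty) (Rbar_locally p_infty).

(* Main.v *)
Require Import Defs.
From Stdlib Require Import Reals Lra FunctionalExtensionality.
From Coquelicot Require Import Coquelicot.
Open Scope R_scope.

Lemma zero_gen (Fa Fb : (R -> Prop) -> Prop) : Filter Fa -> Filter Fb ->
  is_RInt_gen (fun _ : R => 0) Fa Fb 0.
Proof.
  intros HA HB.
  assert (H : is_RInt_gen (Derive (fun _ => 0)) Fa Fb (0 - 0)).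
  { apply (@is_RInt_gen_Derive Fa Fb HA HB (fun _ => 0) 0 0).
    - apply Filter_prod with (fun _ => True) (fun _ => True).
      apply filter_true. apply filter_true. intros. auto_derive; auto.
    - apply Filter_prod with (fun _ => True) (fun _ => True).
      apply filter_true. apply filter_true. intros.
      apply continuous_ext with (fun _ => 0). intros; symmetry; apply Derive_const.
      apply continuous_const.
    - apply filterlim_const.
    - apply filterlim_const. }
  rewrite Rminus_diag in H.
  eapply is_RInt_gen_ext. 2: apply H.
  apply Filter_prod with (fun _ => True) (fun _ => True).
  apply filter_true. apply filter_true. intros. apply Derive_const.
Qed.

Lemma zero_right (f : R -> R) (M : R) : (forall x, M < x -> f x = 0) ->
  is_RInt_gen f (at_point M) (Rbar_locally p_infty) 0.
Proof.
  intros Hf. eapply is_RInt_gen_ext. 2: apply zero_gen.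
  - apply Filter_prod with (fun x => x = M) (fun y => M < y).
    + reflexivity.
    + exists M; auto.
    + intros x y -> Hy z Hz. simpl in Hz. rewrite Rmin_left in Hz by lra.
      symmetry; apply Hf; lra.
  - apply at_point_filter. - apply Rbar_locally_filter.
Qed.

Lemma zero_left (f : R -> R) (M : R) : (forall x, x < M -> f x = 0) ->
  is_RInt_gen f (Rbar_locally m_infty) (at_point M) 0.
Proof.
  intros Hf. eapply is_RInt_gen_ext. 2: apply zero_gen.
  - apply Filter_prod with (fun y => y < M) (fun x => x = M).
    + exists M; auto.
    + reflexivity.
    + intros x y Hx -> z Hz. simpl in Hz. rewrite Rmax_right in Hz by lra.
      symmetry; apply Hf; lra.
  - apply Rbar_locally_filter. - apply at_point_filter.
Qed.

Lemma compact_R (f : R -> R) (u v l : R) : u <= v ->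
  (forall x, x < u -> f x = 0) -> (forall x, v < x -> f x = 0) ->
  is_RInt f u v l ->
  is_RInt_gen f (Rbar_locally m_infty) (Rbar_locally p_infty) l.
Proof.
  intros Huv H1 H2 Hi.
  replace l with (plus (plus 0 l) 0) by (unfold plus; simpl; ring).
  apply (is_RInt_gen_Chasles (V := R_NormedModule) (Fa := Rbar_locally m_infty) (Fc := Rbar_locally p_infty)) with v.
  apply (is_RInt_gen_Chasles (V := R_NormedModule) (Fa := Rbar_locally m_infty) (Fc := at_point v)) with u.
  now apply zero_left.
  now apply is_RInt_gen_at_point.
  now apply zero_right.
Qed.

Lemma half_R (f : R -> R) (M l : R) :
  (forall x, M < x -> f x = 0) ->
  is_RInt f 0 M l ->
  is_RInt_gen f (at_point 0) (Rbar_locally p_infty) l.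
Proof.
  intros H2 Hi.
  replace l with (plus l 0) by (unfold plus; simpl; ring).
  apply (is_RInt_gen_Chasles (V := R_NormedModule) (Fa := at_point 0) (Fc := Rbar_locally p_infty)) with M.
  now apply is_RInt_gen_at_point.
  now apply zero_right.
Qed.

Definition pd0 (a b t : R) := exp (- a * t) - exp (- b * t) ^ 2.

Lemma Theta1 x : 0 <= x -> Theta x = 1.
Proof. unfold Theta; destruct (Rle_dec 0 x); lra. Qed.
Lemma Theta0 x : x < 0 -> Theta x = 0.
Proof. unfold Theta; destruct (Rle_dec 0 x); lra. Qed.

Lemma p_dens_val a b eta t : 0 < a -> 0 < b -> a <> 2 * b -> 0 < t ->
  p_dens a b eta t = eta * (2 * a * b / (2 * b - a)) * pd0 a b t.
Proof.
  intros Ha Hb Hab Ht. unfold p_dens. rewrite Rmult_assoc. f_equal.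
  apply is_RInt_gen_unique.
  apply half_R with t.
  { intros x Hx. unfold psi. rewrite (Theta0 (t - x)) by lra. 
    rewrite Rmult_0_r, Rabs_R0. simpl; ring. }
  apply is_RInt_ext with (fun s => a * exp (- a * s) * (2 * b) * exp (- b * (t - s)) ^ 2).
  { intros x Hx. rewrite Rmin_left in Hx by lra. rewrite Rmax_right in Hx by lra.
    unfold p_em, psi. rewrite Theta1 by lra. rewrite Theta1 by lra.
    rewrite pow2_abs. simpl.
    assert (Hs := sqrt_sqrt (2 * b) ltac:(lra)). 
    transitivity (a * exp (- a * x) * (sqrt (2 * b) * sqrt (2 * b)) * (exp (- b * (t - x)) * exp (- b * (t - x)))); [rewrite Hs|]; ring. }
  assert (H2 : 2 * b - a <> 0) by lra.
  set (G := fun s => 2 * a * b / (2 * b - a) * exp (- a * s) * exp (- b * (t - s)) ^ 2).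
  replace (2 * a * b / (2 * b - a) * pd0 a b t) with (minus (G t) (G 0)).
  2:{ unfold G, minus, plus, opp, pd0; simpl.
      replace (t - t) with 0 by ring. replace (t - 0) with t by ring.
      replace (- a * 0) with 0 by ring. replace (- b * 0) with 0 by ring.
      rewrite exp_0. field. auto. }
  apply (is_RInt_derive (V := R_CompleteNormedModule) G).
  - intros x _. unfold G. auto_derive. auto. replace (t + - x) with (t - x) by ring. field. auto.
  - intros x _. apply (ex_derive_continuous (K := R_AbsRing) (V := R_NormedModule)). auto_derive. auto.
Qed.

Definition Phi (a b c t : R) :=
  - exp (- a * t) * (t - c) / a - exp (- a * t) / a ^ 2
  + exp (- b * t) ^ 2 * (t - c) / (2 * b) + exp (- b * t) ^ 2 / (4 * b ^ 2).

Lemma J a b c u v : 0 < a -> 0 < b ->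
  is_RInt (fun t => pd0 a b t * (t - c)) u v (Phi a b c v - Phi a b c u).
Proof.
  intros Ha Hb.
  apply (is_RInt_derive (V := R_CompleteNormedModule) (Phi a b c)).
  - intros x _. unfold Phi, pd0. auto_derive. auto. field. lra.
  - intros x _. apply (ex_derive_continuous (K := R_AbsRing) (V := R_NormedModule)).
    unfold pd0. auto_derive. auto.
Qed.

Lemma Jmax a b c T : 0 < a -> 0 < b -> 0 <= c <= T ->
  is_RInt (fun t => pd0 a b t * Rmax 0 (t - c)) 0 T (Phi a b c T - Phi a b c c).
Proof.
  intros Ha Hb Hc.
  replace (Phi a b c T - Phi a b c c) with (plus 0 (Phi a b c T - Phi a b c c))
    by (unfold plus; simpl; ring).
  apply (is_RInt_Chasles (V := R_NormedModule)) with c.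
  - apply (is_RInt_ext (V := R_NormedModule)) with (fun _ => 0).
    + intros x Hx. rewrite Rmin_left in Hx by lra. rewrite Rmax_right in Hx by lra.
      change (0 = pd0 a b x * Rmax 0 (x - c)). rewrite Rmax_left by lra. ring.
    + replace (0:R) with (scal (c - 0) 0) at 2 by (unfold scal; simpl; unfold mult; simpl; ring).
      apply (is_RInt_const (V := R_NormedModule)).
  - apply (is_RInt_ext (V := R_NormedModule)) with (fun t => pd0 a b t * (t - c)).
    + intros x Hx. rewrite Rmin_left in Hx by lra. rewrite Rmax_right in Hx by lra.
      change (pd0 a b x * (x - c) = pd0 a b x * Rmax 0 (x - c)). rewrite Rmax_right by lra. ring.
    + apply J; auto.
Qed.

Lemma JL a b T tau : 0 < a -> 0 < b -> 0 < tau <= T ->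
  is_RInt (fun t => pd0 a b t * (Rmin T (t + tau) - Rmax 0 (t - tau))) 0 T
    ((Phi a b (- tau) T - Phi a b (- tau) 0) - (Phi a b (T - tau) T - Phi a b (T - tau) (T - tau))
     - (Phi a b tau T - Phi a b tau tau)).
Proof.
  intros Ha Hb Ht.
  apply (is_RInt_ext (V := R_NormedModule)) with (fun t => minus (minus (pd0 a b t * (t - - tau)) (pd0 a b t * Rmax 0 (t - (T - tau)))) (pd0 a b t * Rmax 0 (t - tau))).
  { intros x _. unfold minus, plus, opp; simpl.
    assert (Rmin T (x + tau) = x + tau - Rmax 0 (x - (T - tau))).
    { unfold Rmin, Rmax. destruct (Rle_dec T (x + tau)), (Rle_dec 0 (x - (T - tau))); lra. }
    rewrite H. ring. }
  apply (is_RInt_minus (V := R_NormedModule)).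
  apply (is_RInt_minus (V := R_NormedModule)).
  apply J; auto. apply Jmax; auto; lra. apply Jmax; auto; lra.
Qed.

Lemma inner a b eta T tau t1 : 0 < T -> 0 < tau -> 0 < t1 < T ->
  is_RInt_gen (fun t2 => ind_close tau t1 t2 * p_T a b eta T t1 * d_T T t2)
    (Rbar_locally m_infty) (Rbar_locally p_infty)
    (p_T a b eta T t1 / T * (Rmin T (t1 + tau) - Rmax 0 (t1 - tau))).
Proof.
  intros HT Htau Ht1. set (K := p_T a b eta T t1).
  apply compact_R with (Rmax 0 (t1 - tau)) (Rmin T (t1 + tau)).
  - unfold Rmin, Rmax. destruct (Rle_dec T (t1 + tau)), (Rle_dec 0 (t1 - tau)); lra.
  - intros x Hx. unfold ind_close, d_T.
    destruct (Rle_dec (Rabs (t1 - x)) tau) as [H|H]; [|ring].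
    assert (x < 0 \/ x < t1 - tau) as [H1|H1].
    { unfold Rmax in Hx. destruct (Rle_dec 0 (t1 - tau)); lra. }
    + rewrite Theta0 by lra. ring.
    + exfalso. pose proof (Rle_abs (t1 - x)). lra.
  - intros x Hx. unfold ind_close, d_T.
    destruct (Rle_dec (Rabs (t1 - x)) tau) as [H|H]; [|ring].
    assert (T < x \/ t1 + tau < x) as [H1|H1].
    { unfold Rmin in Hx. destruct (Rle_dec T (t1 + tau)); lra. }
    + rewrite (Theta0 (T - x)) by lra. ring.
    + exfalso. rewrite Rabs_minus_sym in H. pose proof (Rle_abs (x - t1)). lra.
  - apply (is_RInt_ext (V := R_NormedModule)) with (fun _ => K / T).
    + intros x Hx.
      assert (Rmax 0 (t1 - tau) <= Rmin T (t1 + tau)).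
      { unfold Rmin, Rmax. destruct (Rle_dec T (t1 + tau)), (Rle_dec 0 (t1 - tau)); lra. }
      rewrite (Rmin_left (Rmax 0 (t1 - tau)) (Rmin T (t1 + tau))) in Hx by lra.
      rewrite (Rmax_right (Rmax 0 (t1 - tau)) (Rmin T (t1 + tau))) in Hx by lra.
      assert (0 < x /\ t1 - tau < x) as [Ha1 Ha2].
      { unfold Rmax in Hx. destruct (Rle_dec 0 (t1 - tau)); lra. }
      assert (x < T /\ x < t1 + tau) as [Hb1 Hb2].
      { unfold Rmin in Hx. destruct (Rle_dec T (t1 + tau)); lra. }
      unfold ind_close, d_T.
      destruct (Rle_dec (Rabs (t1 - x)) tau) as [H'|H'].
      * change (K / T = 1 * K * (/ T * Theta x * Theta (T - x))).
        rewrite !Theta1 by lra. field. lra.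
      * exfalso. apply H'. apply Rabs_le. lra.
    + replace (K / T * (Rmin T (t1 + tau) - Rmax 0 (t1 - tau))) with
        (scal (Rmin T (t1 + tau) - Rmax 0 (t1 - tau)) (K / T))
        by (unfold scal; simpl; unfold mult; simpl; ring).
      apply (is_RInt_const (V := R_NormedModule)).
Qed.

Lemma pd_pos a b eta x : 0 < a -> 0 < b -> a <> 2 * b -> 0 < eta -> 0 < x ->
  0 < eta * (2 * a * b / (2 * b - a)) * pd0 a b x.
Proof.
  intros Ha Hb Hab He Hx. unfold pd0.
  assert (E : exp (- b * x) ^ 2 = exp (- (2 * b) * x)).
  { simpl. rewrite Rmult_1_r, <- exp_plus. f_equal. ring. }
  rewrite E.
  assert (H0 : 0 < eta * (2 * a * b)) by (apply Rmult_lt_0_compat; nra).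
  destruct (Rlt_or_le a (2 * b)) as [H|H].
  - assert (exp (- (2 * b) * x) < exp (- a * x)) by (apply exp_increasing; nra).
    unfold Rdiv. rewrite <- Rmult_assoc, <- Rmult_assoc.
    apply Rmult_lt_0_compat; [|lra]. apply Rmult_lt_0_compat; [nra|].
    apply Rinv_0_lt_compat; lra.
  - assert (a <> 2 * b) by auto.
    assert (exp (- a * x) < exp (- (2 * b) * x)) by (apply exp_increasing; nra).
    replace (eta * (2 * a * b / (2 * b - a)) * (exp (- a * x) - exp (- (2 * b) * x)))
      with (eta * (2 * a * b) * / (a - 2 * b) * (exp (- (2 * b) * x) - exp (- a * x)))
      by (field; lra).
    apply Rmult_lt_0_compat; [|lra]. apply Rmult_lt_0_compat; [nra|].
    apply Rinv_0_lt_compat; lra.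
Qed.

Lemma main a b eta T tau :
  0 < a -> 0 < b -> a <> 2 * b -> 0 < eta <= 1 -> 0 < T -> 0 < tau <= T ->
  p_phdc a b eta T tau * p_det a b eta T / eta =
  2 * a * b / (2 * b - a) / T *
    ((Phi a b (- tau) T - Phi a b (- tau) 0) - (Phi a b (T - tau) T - Phi a b (T - tau) (T - tau))
     - (Phi a b tau T - Phi a b tau tau)).
Proof.
  intros Ha Hb Hab He HT Htau.
  set (C := eta * (2 * a * b / (2 * b - a))).
  set (V := (Phi a b (- tau) T - Phi a b (- tau) 0) - (Phi a b (T - tau) T - Phi a b (T - tau) (T - tau))
     - (Phi a b tau T - Phi a b tau tau)).
  assert (HP : 0 < p_det a b eta T).
  { unfold p_det. rewrite (RInt_ext _ (fun t => C * pd0 a b t)).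
    2:{ intros x Hx. rewrite Rmin_left in Hx by lra. rewrite Rmax_right in Hx by lra.
        apply p_dens_val; lra. }
    apply Rle_lt_trans with (RInt (fun _ => 0) 0 T).
    { rewrite RInt_const. unfold scal; simpl; unfold mult; simpl; lra. }
    apply RInt_lt; auto.
    - intros x _. apply (ex_derive_continuous (K := R_AbsRing) (V := R_NormedModule)).
      unfold pd0. auto_derive. auto.
    - intros; apply continuous_const.
    - intros x Hx. apply pd_pos; lra. }
  set (P := p_det a b eta T) in *.
  assert (HpT : forall t, 0 < t < T -> p_T a b eta T t = C * pd0 a b t / P).
  { intros t Ht. unfold p_T. rewrite !Theta1 by lra. rewrite p_dens_val by lra.
    fold C. fold P. unfold Rdiv. rewrite !Rmult_1_l. reflexivity. }
  assert (Hz : forall t1, t1 < 0 \/ T < t1 ->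
     RInt_gen (fun t2 => ind_close tau t1 t2 * p_T a b eta T t1 * d_T T t2)
       (Rbar_locally m_infty) (Rbar_locally p_infty) = 0).
  { intros t1 Ht1.
    replace (fun t2 => ind_close tau t1 t2 * p_T a b eta T t1 * d_T T t2) with (fun _ : R => 0).
    - apply is_RInt_gen_unique. apply zero_gen; apply Rbar_locally_filter.
    - apply functional_extensionality. intros x. unfold p_T.
      destruct Ht1 as [H|H].
      + rewrite (Theta0 t1) by lra. unfold Rdiv; ring.
      + rewrite (Theta0 (T - t1)) by lra. unfold Rdiv; ring. }
  assert (Hmain : p_phdc a b eta T tau = C / P / T * V).
  { unfold p_phdc. apply is_RInt_gen_unique.
    apply compact_R with 0 T; [lra | intros; apply Hz; lra | intros; apply Hz; lra |].
    apply (is_RInt_ext (V := R_NormedModule)) with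
      (fun t => scal (C / P / T) (pd0 a b t * (Rmin T (t + tau) - Rmax 0 (t - tau)))).
    - intros x Hx. rewrite Rmin_left in Hx by lra. rewrite Rmax_right in Hx by lra.
      assert (Hi := inner a b eta T tau x HT (proj1 Htau) Hx).
      apply (is_RInt_gen_unique (V := R_CompleteNormedModule)) in Hi. rewrite Hi.
      rewrite HpT by lra. unfold scal; simpl; unfold mult; simpl. field. lra.
    - replace (C / P / T * V) with (scal (C / P / T) V) by (unfold scal; simpl; unfold mult; simpl; ring).
      apply (is_RInt_scal (V := R_NormedModule)). apply JL; lra. }
  rewrite Hmain. unfold C. field. repeat split; lra.
Qed.

Lemma alg a b T tau : 0 < a -> 0 < b -> a <> 2 * b -> 0 < T ->
  2 * a * b / (2 * b - a) / T *
    ((Phi a b (- tau) T - Phi a b (- tau) 0) - (Phi a b (T - tau) T - Phi a b (T - tau) (T - tau))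
     - (Phi a b tau T - Phi a b tau tau)) =
    a / (2 * b * (a - 2 * b) * T) *
      (1 + 2 * b * tau - exp (- (2 * b * tau))
       + exp (- (2 * b * T)) * (1 - 2 * b * tau - exp (2 * b * tau)))
  - 2 * b / (a * (a - 2 * b) * T) *
      (1 + a * tau - exp (- (a * tau))
       + exp (- (a * T)) * (1 - a * tau - exp (a * tau))).
Proof.
  intros Ha Hb Hab HT. unfold Phi.
  assert (E1 : exp (- a * T) = exp (- (a * T))) by (f_equal; ring).
  assert (E2 : exp (- a * 0) = 1) by (rewrite <- exp_0; f_equal; ring).
  assert (E3 : exp (- a * (T - tau)) = exp (- (a * T)) * exp (a * tau))
    by (rewrite <- exp_plus; f_equal; ring).
  assert (E4 : exp (- a * tau) = / exp (a * tau))
    by (rewrite <- exp_Ropp; f_equal; ring).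
  assert (E5 : exp (- (a * tau)) = / exp (a * tau)) by (apply exp_Ropp).
  assert (F1 : exp (- b * T) ^ 2 = exp (- (2 * b * T)))
    by (simpl; rewrite Rmult_1_r, <- exp_plus; f_equal; ring).
  assert (F2 : exp (- b * 0) ^ 2 = 1) by (simpl; rewrite Rmult_1_r, <- exp_plus, <- exp_0; f_equal; ring).
  assert (F3 : exp (- b * (T - tau)) ^ 2 = exp (- (2 * b * T)) * exp (2 * b * tau))
    by (simpl; rewrite Rmult_1_r, <- !exp_plus; f_equal; ring).
  assert (F4 : exp (- b * tau) ^ 2 = / exp (2 * b * tau))
    by (simpl; rewrite Rmult_1_r, <- exp_plus, <- exp_Ropp; f_equal; ring).
  assert (F5 : exp (- (2 * b * tau)) = / exp (2 * b * tau)) by (apply exp_Ropp).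
  rewrite E1, E2, E3, E4, E5, F1, F2, F3, F4, F5.
  assert (exp (a * tau) <> 0) by (apply Rgt_not_eq, exp_pos).
  assert (exp (2 * b * tau) <> 0) by (apply Rgt_not_eq, exp_pos).
  field. repeat split; lra.
Qed.

Theorem theorem8 (a b eta T tau : R) :
  0 < a -> 0 < b -> a <> 2 * b -> 0 < eta <= 1 -> 0 < T -> 0 < tau <= T ->
  p_phdc a b eta T tau * p_det a b eta T / eta =
    a / (2 * b * (a - 2 * b) * T) *
      (1 + 2 * b * tau - exp (- (2 * b * tau))
       + exp (- (2 * b * T)) * (1 - 2 * b * tau - exp (2 * b * tau)))
  - 2 * b / (a * (a - 2 * b) * T) *
      (1 + a * tau - exp (- (a * tau))
       + exp (- (a * T)) * (1 - a * tau - exp (a * tau))).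
Proof.
  intros Ha Hb Hab He HT Htau.
  rewrite main by auto. apply alg; auto.
Qed.
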